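(* Let $x,y\in\mathbb{R}$ and let $\mathcal{A}$ be the Apollonian disk packing generated by a tricycle whose three disks have signed curvatures $1-y$, $x^2+y^2-y$ and $y$. Suppose $\mathcal{A}$ is integral up to scaling, i.e. there is a real $\lambda>0$ such that $\lambda\kappa\in\mathbb{Z}$ for the curvature $\kappa$ of every disk of $\mathcal{A}$. Then $x\in\mathbb{Q}$ and $y\in\mathbb{Q}$.
   Context: A tricycle is a triple of mutually tangent (generalized) disks (circles or lines, with signed curvatures, a line having curvature $0$ and an enclosing disk having negative curvature). A Descartes configuration is a quadruple of mutually tangent disks, with curvatures satisfying $(a+b+c+d)^2=2(a^2+b^2+c^2+d^2)$. The Apollonian disk packing generated by a tricycle is obtained by recursively completing every tricycle already constructed to a Descartes configuration. The triple $(1-y,\,x^2+y^2-y,\,y)$ is the curvature triple of the tricycle described by the tangency Pauli spinor $(1,\,x+iy)$, i.e. by the two tangency spinors $(1,0)$ and $(x,y)$ issuing from the disk of curvature $y$. *)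

(* Defs.v *)
From Stdlib Require Import Reals QArith.
Open Scope R_scope.

Definition descartes (a b c d : R) : Prop :=
  (a + b + c + d) ^ 2 = 2 * (a ^ 2 + b ^ 2 + c ^ 2 + d ^ 2).

(* Curvature triples of the tricycles constructed in the Apollonian packing
   generated by a tricycle with curvatures (a0, b0, c0): the generating
   tricycle is constructed, and every constructed tricycle (a,b,c) is
   completed to a Descartes configuration (a,b,c,d) in every possible way,
   which produces the new tricycles (a,b,d), (a,c,d), (b,c,d). *)
Inductive packing_tricycle (a0 b0 c0 : R) : R -> R -> R -> Prop :=
| pk_init : packing_tricycle a0 b0 c0 a0 b0 c0
| pk_step1 a b c d : packing_tricycle a0 b0 c0 a b c -> descartes a b c d ->
    packing_tricycle a0 b0 c0 a b d
| pk_step2 a b c d : packing_tricycle a0 b0 c0 a b c -> descartes a b c d ->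
    packing_tricycle a0 b0 c0 a c d
| pk_step3 a b c d : packing_tricycle a0 b0 c0 a b c -> descartes a b c d ->
    packing_tricycle a0 b0 c0 b c d.

Definition packing_curvature (a0 b0 c0 k : R) : Prop :=
  exists a b c, packing_tricycle a0 b0 c0 a b c /\ (k = a \/ k = b \/ k = c).

Definition integral_up_to_scaling (a0 b0 c0 : R) : Prop :=
  exists lam : R, 0 < lam /\
    forall k, packing_curvature a0 b0 c0 k -> exists z : Z, lam * k = IZR z.

Definition is_rational (r : R) : Prop := exists q : Q, r = Q2R q.

(* Main.v *)
Require Import Defs.
From Stdlib Require Import Reals QArith Lra Lia.
Open Scope R_scope.

Theorem proposition7 (x y : R) :
  integral_up_to_scaling (1 - y) (x ^ 2 + y ^ 2 - y) y ->
  is_rational x /\ is_rational y.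
Proof.
  intros [lam [Hl H]].
  set (a := 1 - y). set (b := x ^ 2 + y ^ 2 - y).
  assert (Ha : packing_curvature a b y a).
  { exists a, b, y; split; [constructor | auto]. }
  assert (Hc : packing_curvature a b y y).
  { exists a, b, y; split; [constructor | auto]. }
  assert (Hp : packing_curvature a b y (a + b + y + 2 * x)).
  { exists a, b, (a + b + y + 2 * x); split; [|auto].
    apply pk_step1 with y; [constructor|]. unfold descartes, a, b; ring. }
  assert (Hm : packing_curvature a b y (a + b + y - 2 * x)).
  { exists a, b, (a + b + y - 2 * x); split; [|auto].
    apply pk_step1 with y; [constructor|]. unfold descartes, a, b; ring. }
  destruct (H _ Ha) as [za Ea]. destruct (H _ Hc) as [zc Ec].
  destruct (H _ Hp) as [zp Ep]. destruct (H _ Hm) as [zm Em].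
  assert (El : lam = IZR (za + zc)) by (rewrite plus_IZR; unfold a in Ea; lra).
  assert (Hpos : (0 < za + zc)%Z) by (apply lt_IZR; lra).
  destruct (za + zc)%Z as [|p|p] eqn:E; try lia.
  split.
  - exists ((zp - zm) # (4 * p))%Q. unfold Q2R; simpl.
    replace (Z.pos p~0~0) with (4 * Z.pos p)%Z by reflexivity.
    rewrite minus_IZR, mult_IZR, <- Ep, <- Em, <- El. field. lra.
  - exists (zc # p)%Q. unfold Q2R; simpl. rewrite <- Ec, <- El. field. lra.
Qed.
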